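(* Let $(\mathcal{X},c)$ be a metric space with diameter at most $1$ and let $\mu,\nu$ be discrete probability distributions on $\mathcal{X}$ with finite supports. Then $\mathrm{RPW}_{\infty,1}(\mu,\nu)=\mathrm{LP}(\mu,\nu)$.
   Context: $c(x,y)\le1$ for all $x,y$. For $\alpha\in[0,1]$, a partial transport plan of mass $\alpha$ between $\mu,\nu$ is a nonnegative measure $\gamma$ on $\mathcal{X}\times\mathcal{X}$ of total mass $\alpha$ with first marginal $\le\mu$ and second marginal $\le\nu$ (setwise). Its $\infty$-cost $w_\infty(\gamma)$ is the maximum of $c$ over the support of $\gamma$, and $W_{\infty,\alpha}(\mu,\nu)=\inf w_\infty(\gamma)$ over such $\gamma$. $\mathrm{RPW}_{\infty,k}(\mu,\nu)=\inf\{\varepsilon\in[0,1]: W_{\infty,1-\varepsilon}(\mu,\nu)\le k\varepsilon\}$. The Lévy–Prokhorov distance is $\mathrm{LP}(\mu,\nu)=\inf\{\varepsilon>0: \mu(A)\le\nu(A^\varepsilon)+\varepsilon \text{ and } \nu(A)\le\mu(A^\varepsilon)+\varepsilon \text{ for all Borel } A\}$, where $A^\varepsilon=\{x: \inf_{a\in A}c(x,a)<\varepsilon\}$. *)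

(* Defs.v *)
From mathcomp Require Import all_boot all_order all_algebra.
From mathcomp Require Import all_classical all_reals.
Set Implicit Arguments. Unset Strict Implicit. Unset Printing Implicit Defensive.
Import Order.TTheory GRing.Theory Num.Theory.
Local Open Scope classical_set_scope.
Local Open Scope ring_scope.

Definition is_metric {R : realType} {T : Type} (c : T -> T -> R) : Prop :=
  [/\ forall x y, 0 <= c x y,
      forall x y, c x y = 0 <-> x = y,
      forall x y, c x y = c y x &
      forall x y z, c x z <= c x y + c y z].

(* A discrete (finitely supported) nonnegative measure on T is given by its
   mass function m : T -> R; the measure of a set A is the (finite) sum
   \sum_(x \in A) m x. *)
Definition fin_supp {R : realType} {T : Type} (m : T -> R) : Prop :=
  finite_set [set x | m x != 0].

Definition msr {R : realType} {T : choiceType} (m : T -> R) (A : set T) : R :=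
  \sum_(x \in A) m x.

Definition is_discrete_prob {R : realType} {T : choiceType} (m : T -> R) : Prop :=
  [/\ forall x, 0 <= m x, fin_supp m & msr m setT = 1].

Definition partial_plan {R : realType} {T : choiceType} (mu nu : T -> R)
    (alpha : R) (g : T * T -> R) : Prop :=
  [/\ forall p, 0 <= g p, fin_supp g, msr g setT = alpha,
      (forall A : set T, msr g (A `*` setT) <= msr mu A) &
      (forall A : set T, msr g (setT `*` A) <= msr nu A)].

(* infinity-cost: max of c over the support of g (0 for the zero measure). *)
Definition w_infty {R : realType} {T : choiceType} (c : T -> T -> R)
    (g : T * T -> R) : R :=
  sup [set c p.1 p.2 | p in [set p | g p != 0]].

Definition W_infty {R : realType} {T : choiceType} (c : T -> T -> R)
    (alpha : R) (mu nu : T -> R) : R :=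
  inf [set w_infty c g | g in partial_plan mu nu alpha].

Definition RPW_infty {R : realType} {T : choiceType} (c : T -> T -> R)
    (k : R) (mu nu : T -> R) : R :=
  inf [set eps | 0 <= eps <= 1 /\ W_infty c (1 - eps) mu nu <= k * eps].

Definition nbhd_eps {R : realType} {T : Type} (c : T -> T -> R) (A : set T)
    (eps : R) : set T :=
  [set x | exists2 a, A a & c x a < eps].

Definition LP {R : realType} {T : choiceType} (c : T -> T -> R)
    (mu nu : T -> R) : R :=
  inf [set eps | 0 < eps /\ forall A : set T,
        msr mu A <= msr nu (nbhd_eps c A eps) + eps /\
        msr nu A <= msr mu (nbhd_eps c A eps) + eps].

(* Main.v *)
Require Import Defs.
From mathcomp Require Import all_boot all_order all_algebra.
From mathcomp Require Import all_classical all_reals.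
From mathcomp Require Import lra.
From mathcomp Require finmap.
Set Implicit Arguments. Unset Strict Implicit. Unset Printing Implicit Defensive.
Import Order.TTheory GRing.Theory Num.Theory.
Local Open Scope ring_scope.
Section Aux.
Variable R : realType.

Lemma sum_option (Y : finType) (F : option Y -> R) :
  \sum_(o : option Y) F o = F None + \sum_(y : Y) F (Some y).
Proof.
rewrite -!(big_enum _ _) /= !enumT.
have -> : Finite.enum (option Y) = None :: map Some (Finite.enum Y).
  by rewrite Finite.enum.unlock /= /option_enum Finite.enum.unlock.
by rewrite big_cons big_map.
Qed.

Lemma sum_delta (I : finType) (A : {pred I}) i0 (s : R) :
  \sum_(i in A) (if i == i0 then s else 0) = if i0 \in A then s else 0.
Proof.
case: (boolP (i0 \in A)) => h.
  rewrite (bigD1 i0) //= eqxx big1 ?addr0 // => i /andP[_ /negbTE ->] //.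
by rewrite big1 // => i iA; case: eqP => // e; rewrite -e iA in h.
Qed.

Lemma sum_deltaT (I : finType) i0 (s : R) :
  \sum_(i : I) (if i == i0 then s else 0) = s.
Proof. by rewrite (bigD1 i0) //= eqxx big1 ?addr0 // => i /negbTE ->. Qed.

Lemma sub_sum_le (I : finType) (A B : {set I}) (F : I -> R) :
  A \subset B -> (forall i, 0 <= F i) -> \sum_(i in A) F i <= \sum_(i in B) F i.
Proof.
move=> AB F0; rewrite [leRHS](big_setID A) /=.
have -> : B :&: A = A by apply/finset.setIidPr.
rewrite lerDl.
by apply: sumr_ge0.
Qed.

Lemma exists_min (I : finType) (P : pred I) (F : I -> R) :
  (exists i, P i) -> exists i, P i /\ forall j, P j -> F i <= F j.
Proof.
case=> i0 Pi0; case: (@arg_minP _ R I i0 P F Pi0) => i Pi H.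
by exists i; split.
Qed.

Lemma card_supp_le (I : finType) (f g : I -> R) :
  (forall i, f i = 0 -> g i = 0) ->
  (#|[set i | g i != 0%R]| <= #|[set i | f i != 0%R]|)%N.
Proof.
move=> fg; apply: subset_leq_card; apply/fintype.subsetP => i; rewrite !inE.
by apply: contra => /eqP/fg ->.
Qed.

Lemma card_supp_lt (I : finType) (f g : I -> R) i0 :
  (forall i, f i = 0 -> g i = 0) -> f i0 != 0 -> g i0 = 0 ->
  (#|[set i | g i != 0%R]| < #|[set i | f i != 0%R]|)%N.
Proof.
move=> fg f0 g0; apply: proper_card; apply/fintype.properP; split.
  apply/fintype.subsetP => i; rewrite !inE.
  by apply: contra => /eqP/fg ->.
by exists i0; rewrite !inE ?f0 ?g0 ?eqxx.
Qed.
End Aux.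

Section Hall.
Variable R : realType.
Variables (X Y : finType) (E : X -> Y -> bool).

Definition NB (A : {set X}) : {set Y} := [set y | [exists x in A, E x y]].

Definition hallc (mu : X -> R) (nu : Y -> R) :=
  forall A : {set X}, \sum_(x in A) mu x <= \sum_(y in NB A) nu y.

Definition flow (mu : X -> R) (nu : Y -> R) (g : X -> Y -> R) :=
  [/\ forall x y, 0 <= g x y, forall x y, ~~ E x y -> g x y = 0,
      forall x, \sum_y g x y = mu x & forall y, \sum_x g x y <= nu y].

Lemma NB_in (A : {set X}) x y : x \in A -> E x y -> y \in NB A.
Proof. by move=> xA Exy; rewrite inE; apply/existsP; exists x; rewrite xA. Qed.

Lemma flow_ext mu nu mu' nu' g : flow mu nu g ->
  (forall x, mu x = mu' x) -> (forall y, nu y <= nu' y) -> flow mu' nu' g.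
Proof.
case=> g0 gE gr gc hm hn; split => // [x|y]; first by rewrite gr hm.
exact: le_trans (gc y) (hn y).
Qed.

Lemma flow_add mu1 nu1 g1 mu2 nu2 g2 : flow mu1 nu1 g1 -> flow mu2 nu2 g2 ->
  flow (fun x => mu1 x + mu2 x) (fun y => nu1 y + nu2 y)
       (fun x y => g1 x y + g2 x y).
Proof.
case=> g10 g1E g1r g1c [g20 g2E g2r g2c]; split.
- by move=> x y; rewrite addr_ge0.
- by move=> x y e; rewrite g1E // g2E // addr0.
- by move=> x; rewrite big_split /= g1r g2r.
- by move=> y; rewrite big_split /= lerD.
Qed.

Lemma flow_delta x0 y0 (s : R) : E x0 y0 -> 0 <= s ->
  flow (fun x => if x == x0 then s else 0) (fun y => if y == y0 then s else 0)
       (fun x y => if (x == x0) && (y == y0) then s else 0).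
Proof.
move=> e s0; split.
- by move=> x y; case: ifP.
- by move=> x y; case: andP => // -[/eqP -> /eqP ->]; rewrite e.
- move=> x /=; case: (boolP (x == x0)) => h /=; first by rewrite sum_deltaT.
  by rewrite big1.
- move=> y /=; case: (boolP (y == y0)) => h /=.
    by under eq_bigr do rewrite andbT; rewrite sum_deltaT.
  by rewrite big1 // => x _; rewrite andbF.
Qed.

Lemma flow0 mu nu : (forall x, mu x = 0) -> (forall y, 0 <= nu y) ->
  flow mu nu (fun _ _ => 0).
Proof.
move=> m0 n0; split => //.
- by move=> x; rewrite big1 // m0.
- by move=> y; rewrite big1.
Qed.

Lemma hall_resid mu nu x0 y0 s : hallc mu nu -> E x0 y0 ->
  (forall A : {set X}, x0 \notin A -> y0 \in NB A ->
     s <= \sum_(y in NB A) nu y - \sum_(x in A) mu x) ->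
  hallc (fun x => mu x - (if x == x0 then s else 0))
        (fun y => nu y - (if y == y0 then s else 0)).
Proof.
move=> H e Hs A; rewrite !sumrB !sum_delta.
have := H A.
case: (boolP (x0 \in A)) => xA.
  by rewrite (NB_in xA e) lerB.
case: (boolP (y0 \in NB A)) => yA; last by rewrite !subr0.
move: (Hs A xA yA) => h1 h2; lra.
Qed.

Lemma hall_split1 mu nu (A : {set X}) : (forall y, 0 <= nu y) -> hallc mu nu ->
  hallc (fun x => if x \in A then mu x else 0)
        (fun y => if y \in NB A then nu y else 0).
Proof.
move=> n0 H B; rewrite -!big_mkcondr /=.
have -> : \sum_(x in B | x \in A) mu x = \sum_(x in B :&: A) mu x.
  by apply: eq_bigl => x; rewrite inE.
have -> : \sum_(y in NB B | y \in NB A) nu y = \sum_(y in NB B :&: NB A) nu y.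
  by apply: eq_bigl => y; rewrite finset.in_setI.
apply: le_trans (H _) _; apply: sub_sum_le => //.
apply/fintype.subsetP => y; rewrite !inE => /existsP[x /andP[]].
rewrite inE => /andP[xB xA] e.
by apply/andP; split; apply/existsP; exists x; rewrite ?xB ?xA.
Qed.

Lemma hall_split2 mu nu (A : {set X}) : (forall y, 0 <= nu y) -> hallc mu nu ->
  \sum_(y in NB A) nu y <= \sum_(x in A) mu x ->
  hallc (fun x => if x \in A then 0 else mu x)
        (fun y => if y \in NB A then 0 else nu y).
Proof.
move=> n0 H tA B.
have e1 : \sum_(x in B) (if x \in A then 0 else mu x) = \sum_(x in B :\: A) mu x.
  rewrite big_mkcond [RHS]big_mkcond; apply: eq_bigr => x _; rewrite finset.in_setD.
  by case: (x \in A); case: (x \in B).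
have e2 : \sum_(y in NB B) (if y \in NB A then 0 else nu y) =
          \sum_(y in NB B :\: NB A) nu y.
  rewrite big_mkcond [RHS]big_mkcond; apply: eq_bigr => y _; rewrite finset.in_setD.
  by case: (y \in NB A); case: (y \in NB B).
rewrite e1 e2.
have h1 := H (B :|: A).
rewrite (big_setID A) /= in h1.
have E1 : (B :|: A) :&: A = A by apply/finset.setIidPr; apply: finset.subsetUr.
have E2 : (B :|: A) :\: A = B :\: A by rewrite finset.setDUl finset.setDv finset.setU0.
rewrite E1 E2 in h1.
rewrite [X in _ <= X](big_setID (NB A)) /= in h1.
have E3 : NB (B :|: A) :&: NB A = NB A.
  apply/finset.setIidPr; apply/fintype.subsetP => y; rewrite !inE.
  move=> /existsP[x /andP[xA e]]; apply/existsP; exists x; rewrite inE xA orbT //.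
rewrite E3 in h1.
have h2 : \sum_(i in NB (B :|: A) :\: NB A) nu i <= \sum_(y in NB B :\: NB A) nu y.
  apply: sub_sum_le => //; apply/fintype.subsetP => y; rewrite !finset.in_setD.
  case/andP => yA; rewrite yA /=; move: yA; rewrite !inE => yA /existsP[x /andP[]].
  rewrite inE => /orP[xB e|xA e] /=.
    by apply/existsP; exists x; rewrite xB.
  by case/negP: yA; apply/existsP; exists x; rewrite xA.
lra.
Qed.

Theorem hall0 mu nu : (forall x, 0 <= mu x) -> (forall y, 0 <= nu y) ->
  hallc mu nu -> exists g, flow mu nu g.
Proof.
have [n] := ubnP (#|[set x | mu x != 0%R]| + #|[set y | nu y != 0%R]|).
elim: n mu nu => // n IH mu nu Hn m0 n0 H.
case: (pickP [pred x | mu x != 0]) => [x0 /= mx0 | mz]; last first.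
  by exists (fun _ _ => 0); apply: flow0 => // x; move: (mz x) => /= /negbFE/eqP.
have mx0p : 0 < mu x0 by rewrite lt_def mx0 m0.
have [y0 /andP[e ny0]] : exists y0, E x0 y0 && (0 < nu y0).
  case: (pickP [pred y | E x0 y && (0 < nu y)]) => [y0 h|hn]; first by exists y0.
  have := H [set x0]; rewrite big_set1 big1 => [h|y].
    by move: (lt_le_trans mx0p h); rewrite ltxx.
  rewrite inE => /existsP[x /andP[]]; rewrite inE => /eqP -> ex.
  move: (hn y) => /=; rewrite ex /= => /negbT; rewrite -leNgt => h.
  by apply/eqP; rewrite eq_le h n0.
set s0 := Num.min (mu x0) (nu y0).
have s0m : s0 <= mu x0 by rewrite ge_min lexx.
have s0n : s0 <= nu y0 by rewrite ge_min lexx orbT.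
have s0p : 0 < s0 by rewrite lt_min mx0p ny0.
pose slack (A : {set X}) := \sum_(y in NB A) nu y - \sum_(x in A) mu x.
pose mu' s := fun x => mu x - (if x == x0 then s else 0).
pose nu' s := fun y => nu y - (if y == y0 then s else 0).
have m'0 : forall s, s <= mu x0 -> forall x, 0 <= mu' s x.
  move=> s hs x; rewrite /mu'; case: eqP => [->|_]; first by rewrite subr_ge0.
  by rewrite subr0.
have n'0 : forall s, s <= nu y0 -> forall y, 0 <= nu' s y.
  move=> s hs y; rewrite /nu'; case: eqP => [->|_]; first by rewrite subr_ge0.
  by rewrite subr0.
have comb : forall s g, 0 <= s -> flow (mu' s) (nu' s) g ->
    flow mu nu (fun x y => g x y + if (x == x0) && (y == y0) then s else 0).
  move=> s g sp f; apply: (flow_ext (flow_add f (flow_delta e sp))) => [x|y].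
    by rewrite /mu' subrK.
  by rewrite /nu' subrK.
have suppm : forall s x, mu x = 0 -> mu' s x = 0.
  move=> s x h; rewrite /mu'; case: eqP => [ex|_]; last by rewrite h subr0.
  by rewrite -ex h eqxx in mx0.
have suppn : forall s y, nu y = 0 -> nu' s y = 0.
  move=> s y h; rewrite /nu'; case: eqP => [ey|_]; last by rewrite h subr0.
  by rewrite -ey h ltxx in ny0.
case: (pickP [pred A : {set X} | (x0 \notin A) && (y0 \in NB A) && (slack A < s0)])
  => [A1 /= /andP[/andP[xA1 yA1] sA1] | noA].
- have [A [/andP[xA yA] Amin]] :=
    @exists_min R _ (fun A : {set X} => (x0 \notin A) && (y0 \in NB A)) slack
      (ex_intro _ A1 (introT andP (conj xA1 yA1))).
  set s := slack A.
  have sp : 0 <= s by rewrite subr_ge0 H.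
  have ss0 : s < s0 by apply: le_lt_trans (Amin A1 _) sA1; rewrite xA1 yA1.
  have Hr : hallc (mu' s) (nu' s).
    by apply: hall_resid H e _ => B xB yB; apply: Amin; rewrite xB yB.
  have tight : \sum_(y in NB A) nu' s y <= \sum_(x in A) mu' s x.
    rewrite /mu' /nu' !sumrB !sum_delta (negbTE xA) yA /s /slack; lra.
  have ms : s <= mu x0 by apply: le_trans (ltW ss0) s0m.
  have ns : s <= nu y0 by apply: le_trans (ltW ss0) s0n.
  pose mu1 := fun x => if x \in A then mu' s x else 0.
  pose nu1 := fun y => if y \in NB A then nu' s y else 0.
  pose mu2 := fun x => if x \in A then 0 else mu' s x.
  pose nu2 := fun y => if y \in NB A then 0 else nu' s y.
  have [g1 f1] : exists g, flow mu1 nu1 g.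
    apply: IH.
    + have h1 := @card_supp_lt R _ mu mu1 x0.
      have h2 := @card_supp_le R _ nu nu1.
      have h1' : (#|[set x | mu1 x != 0%R]| < #|[set x | mu x != 0%R]|)%N.
        apply: h1 => //; last by rewrite /mu1 (negbTE xA).
        by move=> x hx; rewrite /mu1 suppm //; case: ifP.
      have h2' : (#|[set y | nu1 y != 0%R]| <= #|[set y | nu y != 0%R]|)%N.
        by apply: h2 => y hy; rewrite /nu1 suppn //; case: ifP.
      rewrite ltnS in Hn; apply: leq_trans Hn; rewrite -addSn; exact: leq_add h1' h2'.
    + by move=> x; rewrite /mu1; case: ifP => // _; apply: m'0.
    + by move=> y; rewrite /nu1; case: ifP => // _; apply: n'0.
    + exact: (hall_split1 _ (n'0 s ns) Hr).
  have [g2 f2] : exists g, flow mu2 nu2 g.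
    apply: IH.
    + have h1 := @card_supp_le R _ mu mu2.
      have h2 := @card_supp_lt R _ nu nu2 y0.
      have h1' : (#|[set x | mu2 x != 0%R]| <= #|[set x | mu x != 0%R]|)%N.
        by apply: h1 => x hx; rewrite /mu2 suppm //; case: ifP.
      have h2' : (#|[set y | nu2 y != 0%R]| < #|[set y | nu y != 0%R]|)%N.
        apply: h2; last by rewrite /nu2 yA.
          by move=> y hy; rewrite /nu2 suppn //; case: ifP.
        by rewrite gt_eqF.
      rewrite ltnS in Hn; apply: leq_trans Hn; rewrite -addnS; exact: leq_add h1' h2'.
    + by move=> x; rewrite /mu2; case: ifP => // _; apply: m'0.
    + by move=> y; rewrite /nu2; case: ifP => // _; apply: n'0.
    + by apply: hall_split2 => //; apply: n'0.
  exists (fun x y => (g1 x y + g2 x y) + if (x == x0) && (y == y0) then s else 0).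
  apply: comb => //; apply: (flow_ext (flow_add f1 f2)) => [x|y].
    by rewrite /mu1 /mu2; case: ifP; rewrite ?addr0 ?add0r.
  by rewrite /nu1 /nu2; case: ifP; rewrite ?addr0 ?add0r.
- have Hr : hallc (mu' s0) (nu' s0).
    apply: hall_resid H e _ => B xB yB.
    by move: (noA B) => /=; rewrite xB yB /= => /negbT; rewrite -leNgt.
  have [g f] : exists g, flow (mu' s0) (nu' s0) g.
    apply: IH; last exact: Hr.
    + have h1 := @card_supp_le R _ mu (mu' s0).
      have h2 := @card_supp_le R _ nu (nu' s0).
      have h1' := h1 (suppm s0); have h2' := h2 (suppn s0).
      have [hm|hn] : s0 = mu x0 \/ s0 = nu y0.
        by rewrite /s0 minEle; case: ifP; auto.
      * have h3 : (#|[set x | mu' s0 x != 0%R]| < #|[set x | mu x != 0%R]|)%N.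
          by apply: (card_supp_lt (suppm s0) mx0); rewrite /mu' eqxx hm subrr.
        rewrite ltnS in Hn; apply: leq_trans Hn; rewrite -addSn; exact: leq_add h3 h2'.
      * have h3 : (#|[set y | nu' s0 y != 0%R]| < #|[set y | nu y != 0%R]|)%N.
          by apply: (card_supp_lt (suppn s0) (lt0r_neq0 ny0)); rewrite /nu' eqxx hn subrr.
        rewrite ltnS in Hn; apply: leq_trans Hn; rewrite -addnS; exact: leq_add h1' h3.
    + exact: m'0.
    + exact: n'0.
  by exists (fun x y => g x y + if (x == x0) && (y == y0) then s0 else 0); apply: comb => //; apply: ltW.
Qed.
End Hall.

Theorem hall_d (R : realType) (X Y : finType) (E : X -> Y -> bool)
  (mu : X -> R) (nu : Y -> R) (d : R) :
  (forall x, 0 <= mu x) -> (forall y, 0 <= nu y) ->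
  (forall A : {set X}, \sum_(x in A) mu x <= \sum_(y in NB E A) nu y + d) ->
  exists g : X -> Y -> R,
    [/\ forall x y, 0 <= g x y, forall x y, ~~ E x y -> g x y = 0,
        forall x, \sum_y g x y <= mu x, forall y, \sum_x g x y <= nu y &
        \sum_x mu x - d <= \sum_x \sum_y g x y].
Proof.
move=> m0 n0 H.
have d0 : 0 <= d.
  have := H finset.set0; rewrite big_set0 big1 ?add0r // => y.
  by rewrite inE => /existsP[x]; rewrite inE.
pose E' x (o : option Y) := if o is Some y then E x y else true.
pose nu' (o : option Y) := if o is Some y then nu y else d.
have n'0 : forall o, 0 <= nu' o by case.
have H' : hallc E' mu nu'.
  move=> A; case: (set_0Vmem A) => [->|[x xA]].
    by rewrite big_set0 sumr_ge0.
  rewrite [X in _ <= X]big_mkcond sum_option /=.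
  have -> : None \in NB E' A by rewrite inE; apply/existsP; exists x; rewrite xA.
  rewrite addrC; apply: le_trans (H A) _; rewrite lerD2r.
  rewrite [leRHS](_ : _ = \sum_(y in NB E A) nu y) //.
  by rewrite [RHS]big_mkcond; apply: eq_bigr => y _; rewrite !inE.
have [g [g0 gE gr gc]] := hall0 m0 n'0 H'.
exists (fun x y => g x (Some y)); split.
- by [].
- by move=> x y e; apply: gE.
- by move=> x; rewrite -gr sum_option lerDr.
- by move=> y; apply: gc (Some y).
- have -> : \sum_x \sum_y g x (Some y) = \sum_x (mu x - g x None).
    by apply: eq_bigr => x _; rewrite -gr sum_option; lra.
  by rewrite sumrB lerB.
Qed.

Local Open Scope classical_set_scope.
Local Open Scope ring_scope.
Section Msr.
Variable R : realType.
Variable U : choiceType.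

Lemma msrE (f : U -> R) (r : seq U) (A : set U) : uniq r ->
  (forall x, f x != 0 -> x \in r) -> msr f A = \sum_(x <- r | x \in A) f x.
Proof.
move=> ur fr; rewrite /msr (bigfs _ ur) ?set_mem_set // => i _ ir.
by apply/eqP; apply: contraNT ir => /fr.
Qed.

Lemma supp_seq (f : U -> R) : fin_supp f ->
  {r : seq U | uniq r & forall x, f x != 0 -> x \in r}.
Proof.
move=> fs; exists (finmap.enum_fset (fset_set [set x | f x != 0])); first exact: finmap.fset_uniq.
by move=> x fx; rewrite in_fset_set // inE.
Qed.

Lemma msr_le (f : U -> R) (B C : set U) : fin_supp f -> (forall x, 0 <= f x) ->
  (forall x, f x != 0 -> B x -> C x) -> msr f B <= msr f C.
Proof.
move=> fs f0 BC; have [r ur fr] := supp_seq fs.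
rewrite !(msrE _ ur fr) [leLHS]big_mkcond [leRHS]big_mkcond /=.
apply: ler_sum => x _; case: (boolP (f x == 0)) => [/eqP ->|fx].
  by case: ifP; case: ifP.
case: (boolP (x \in B)) => xB; last by case: ifP.
move: xB; rewrite inE => /(BC _ fx) Cx.
by have -> : x \in C by rewrite inE.
Qed.

Lemma msrC (f : U -> R) (B : set U) : fin_supp f ->
  msr f setT = msr f B + msr f (~` B).
Proof.
move=> fs; have [r ur fr] := supp_seq fs.
rewrite !(msrE _ ur fr) (bigID (fun x => x \in B)) /=.
by congr (_ + _); apply: eq_bigl => x; rewrite ?in_setC in_setT.
Qed.

Lemma msr_ge0 (f : U -> R) (B : set U) : (forall x, 0 <= f x) -> 0 <= msr f B.
Proof. by move=> f0; apply: fsumr_ge0. Qed.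
End Msr.
Section SeqSub.
Variable R : realType.
Variable T : choiceType.
Variable r : seq T.
Hypothesis ur : uniq r.

Lemma sumX (F : T -> R) : \sum_(t <- r) F t = \sum_(x : seq_sub r) F (val x).
Proof.
rewrite -(big_enum _ _) /=.
have pe : perm_eq r [seq val x | x <- enum (@predT (seq_sub r))].
  apply: uniq_perm => //; first by rewrite map_inj_uniq ?enum_uniq //; apply: val_inj.
  move=> t; apply/idP/mapP => [tr|[x _ ->]]; last exact: valP.
  by exists (SeqSub tr); rewrite ?mem_enum.
by rewrite (perm_big _ pe) big_map.
Qed.

Lemma sumX_cond (F : T -> R) (P : pred T) :
  \sum_(t <- r | P t) F t = \sum_(x : seq_sub r | P (val x)) F (val x).
Proof. by rewrite big_mkcond sumX [RHS]big_mkcond. Qed.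
End SeqSub.

Section MkPlan.
Variable R : realType.
Variable T : choiceType.
Variables (mu nu : T -> R).
Variable r : seq T.
Hypothesis ur : uniq r.

Lemma mkplan (gX : seq_sub r -> seq_sub r -> R) (alpha : R) :
  (forall x y, 0 <= gX x y) ->
  (forall x, \sum_y gX x y <= mu (val x)) ->
  (forall y, \sum_x gX x y <= nu (val y)) ->
  (forall x, mu x != 0 -> x \in r) -> (forall x, nu x != 0 -> x \in r) ->
  0 <= alpha -> alpha <= \sum_x \sum_y gX x y ->
  exists g, partial_plan mu nu alpha g /\
    (forall p, g p != 0 -> exists x y, gX x y != 0 /\ p = (val x, val y)).
Proof.
move=> g0 grow gcol mur nur a0 alt.
set t := \sum_x \sum_y gX x y in alt.
have t0 : 0 <= t by apply: sumr_ge0 => x _; apply: sumr_ge0.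
pose k := alpha / t.
have k0 : 0 <= k by apply: divr_ge0.
have [kt k1] : k * t = alpha /\ k <= 1.
  case: (eqVneq t 0) => [te|tn].
    have ae : alpha = 0 by apply/eqP; rewrite eq_le a0 -te alt.
    by rewrite /k te ae invr0 !mul0r.
  have tp : 0 < t by rewrite lt_def tn t0.
  split; first by rewrite /k divfK.
  by rewrite /k ler_pdivrMr // mul1r.
pose g (p : T * T) : R := if (insub p.1 : option (seq_sub r)) is Some x then
  if (insub p.2 : option (seq_sub r)) is Some y then k * gX x y else 0 else 0.
have gval : forall x y, g (val x, val y) = k * gX x y.
  by move=> x y; rewrite /g /= !valK.
have gsupp : forall p, g p != 0 -> exists x y, gX x y != 0 /\ p = (val x, val y).
  case=> a b; rewrite /g /=; case: insubP => [x _ ax|_]; last by rewrite eqxx.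
  case: insubP => [y _ ay|_]; last by rewrite eqxx.
  move=> h; exists x, y; split; last by rewrite ax ay.
  by apply: contraNneq h => ->; rewrite mulr0.
pose rr := [seq (a, b) | a <- r, b <- r].
have urr : uniq rr.
  by apply: allpairs_uniq => // -[a b] [c d] _ _.
have hr : forall p, g p != 0 -> p \in rr.
  move=> p /gsupp [x [y [_ ->]]]; apply: allpairs_f; exact: valP.
have msrG : forall B, msr g B = \sum_x \sum_(y | (val x, val y) \in B) k * gX x y.
  move=> B; rewrite (msrE _ urr hr) big_mkcond big_allpairs sumX //.
  apply: eq_bigr => x _; rewrite sumX // [RHS]big_mkcond.
  by apply: eq_bigr => y _; rewrite gval.
have msrM : forall (f : T -> R) (A : set T), (forall x, f x != 0 -> x \in r) ->
    msr f A = \sum_(x : seq_sub r | val x \in A) f (val x).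
  by move=> f A fr; rewrite (msrE _ ur fr) sumX_cond.
exists g; split => //; split.
- case=> a b; rewrite /g /=; case: insub => [x|] //; case: insub => [y|] //.
  exact: mulr_ge0.
- apply: (sub_finite_set _ (finite_seq rr)) => p /= gp.
  by apply: hr.
- rewrite msrG -kt /t mulr_sumr; apply: eq_bigr => x _; rewrite mulr_sumr.
  by apply: eq_bigl => y; rewrite in_setT.
- move=> A; rewrite msrG msrM // [leRHS]big_mkcond /=.
  apply: ler_sum => x _.
  under eq_bigl do rewrite in_setX /= in_setT andbT.
  case: (val x \in A); last by rewrite big_pred0.
  rewrite -mulr_sumr; apply: le_trans (grow x).
  by apply: ler_piMl => //; apply: sumr_ge0.
- move=> A; rewrite msrG msrM //.
  under eq_bigr do rewrite big_mkcond /=.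
  rewrite exchange_big [leRHS]big_mkcond /=.
  apply: ler_sum => y _.
  under eq_bigr do rewrite in_setX /= in_setT.
  case: (val y \in A); last by rewrite big1.
  rewrite -mulr_sumr; apply: le_trans (gcol y).
  by apply: ler_piMl => //; apply: sumr_ge0.
Qed.
End MkPlan.

Section WLemmas.
Variable R : realType.
Variable T : choiceType.
Variable c : T -> T -> R.
Hypothesis c0 : forall x y, 0 <= c x y.
Hypothesis c1 : forall x y, c x y <= 1.

Lemma w_le (g : T * T -> R) b : 0 <= b ->
  (forall p, g p != 0 -> c p.1 p.2 <= b) -> w_infty c g <= b.
Proof.
move=> b0 H; rewrite /w_infty.
set S := [set c p.1 p.2 | p in [set p | g p != 0]].
case: (pselect (S !=set0)) => [ne|e].
  by apply: ge_sup ne _ => _ [p gp <-]; apply: H.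
have Se : S = set0.
  by apply/seteqP; split => [z Sz|z //]; exfalso; apply: e; exists z.
by rewrite Se sup0.
Qed.

Lemma w_ub (g : T * T -> R) p : g p != 0 -> c p.1 p.2 <= w_infty c g.
Proof.
move=> gp; apply: ub_le_sup; last by exists p.
by exists 1 => _ [q _ <-]; apply: c1.
Qed.

Lemma w_ge0 (g : T * T -> R) : 0 <= w_infty c g.
Proof.
rewrite /w_infty; set S := [set c p.1 p.2 | p in [set p | g p != 0]].
case: (pselect (S !=set0)) => [[z [p gp _]]|e].
  by apply: le_trans (c0 p.1 p.2) (w_ub gp).
have Se : S = set0.
  by apply/seteqP; split => [z Sz|z //]; exfalso; apply: e; exists z.
by rewrite Se sup0.
Qed.

Lemma W_le alpha (mu nu : T -> R) g : partial_plan mu nu alpha g ->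
  W_infty c alpha mu nu <= w_infty c g.
Proof.
move=> gp; apply: ge_inf; last by exists g.
by exists 0 => _ [h _ <-]; apply: w_ge0.
Qed.

Lemma W_lt alpha (mu nu : T -> R) e : (exists g, partial_plan mu nu alpha g) ->
  W_infty c alpha mu nu < e -> exists g, partial_plan mu nu alpha g /\ w_infty c g < e.
Proof.
move=> [g0 gp0] /inf_lt [|_ [g gp <-] lt]; first by exists (w_infty c g0), g0.
by exists g.
Qed.
End WLemmas.

Unset Implicit Arguments.

Theorem lemmaA3 (R : realType) (T : choiceType) (c : T -> T -> R)
  (mu nu : T -> R) :
  is_metric c -> (forall x y, c x y <= 1) ->
  is_discrete_prob mu -> is_discrete_prob nu ->
  RPW_infty c 1 mu nu = LP c mu nu.
Proof.
move=> [c0 c00 csym ctri] c1 [m0 mfs m1] [n0 nfs n1].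
have fsU : finite_set ([set x | mu x != 0] `|` [set x | nu x != 0]).
  by rewrite finite_setU; split.
pose r := finmap.enum_fset (fset_set ([set x | mu x != 0] `|` [set x | nu x != 0])).
have ur : uniq r by apply: finmap.fset_uniq.
have mur : forall x, mu x != 0 -> x \in r.
  by move=> x mx; rewrite /r in_fset_set // inE; left.
have nur : forall x, nu x != 0 -> x \in r.
  by move=> x nx; rewrite /r in_fset_set // inE; right.
have msrX : forall (f : T -> R) (A : set T), (forall x, f x != 0 -> x \in r) ->
    msr f A = \sum_(x : seq_sub r | val x \in A) f (val x).
  by move=> f A fr; rewrite (msrE _ ur fr) sumX_cond.
have sumMu : \sum_(x : seq_sub r) mu (val x) = 1.
  by rewrite -m1 (msrX _ _ mur); apply: eq_bigl => x; rewrite in_setT.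
have sumNu : \sum_(x : seq_sub r) nu (val x) = 1.
  by rewrite -n1 (msrX _ _ nur); apply: eq_bigl => x; rewrite in_setT.
have mX0 : forall x : seq_sub r, 0 <= mu (val x) by move=> x; apply: m0.
have nX0 : forall x : seq_sub r, 0 <= nu (val x) by move=> x; apply: n0.
have plan_ex : forall alpha, 0 <= alpha -> alpha <= 1 ->
    exists g, partial_plan mu nu alpha g.
  move=> alpha a0 a1.
  have HC : forall (A : {set (seq_sub r)}), \sum_(x in A) mu (val (x : seq_sub r)) <=
      \sum_(y in NB (fun (_ _ : seq_sub r) => true) A) nu (val (y : seq_sub r)) + 0.
    move=> A; rewrite addr0; case: (set_0Vmem A) => [->|[x xA]].
      by rewrite big_set0; apply: sumr_ge0.
    have -> : \sum_(y in NB (fun (_ _ : seq_sub r) => true) A) nu (val (y : seq_sub r)) = 1.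
      rewrite -sumNu; apply: eq_bigl => y; rewrite inE.
      by apply/existsP; exists x; rewrite xA.
    apply: le_trans (sub_sum_le (finset.subsetT A) mX0) _.
    rewrite -sumMu le_eqVlt; apply/orP; left; apply/eqP.
    by apply: eq_bigl => i; rewrite finset.in_setT.
  have [gX [g0 gE gr gc gt]] := hall_d mX0 nX0 HC.
  have ta : alpha <= \sum_x \sum_y gX x y.
    by apply: le_trans a1 (le_trans _ gt); rewrite sumMu subr0.
  have [g [gp _]] := mkplan ur g0 gr gc mur nur a0 ta.
  by exists g.
set S1 := [set eps | 0 <= eps <= 1 /\ W_infty c (1 - eps) mu nu <= 1 * eps].
set S2 := [set eps | 0 < eps /\ forall A : set T,
        msr mu A <= msr nu (nbhd_eps c A eps) + eps /\
        msr nu A <= msr mu (nbhd_eps c A eps) + eps].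
have S1lb : has_lbound S1 by exists 0 => e [/andP[e0 _] _].
have S2lb : has_lbound S2 by exists 0 => e [e0 _]; apply: ltW.
have one1 : S1 1.
  split; first by rewrite ler01 lexx.
  have [g gp] := plan_ex 0 (lexx _) ler01.
  rewrite subrr mul1r; apply: le_trans (W_le c0 c1 gp) _.
  by apply: w_le => // p _; apply: c1.
have mu_le1 : forall A, msr mu A <= 1.
  by move=> A; rewrite -m1; apply: msr_le.
have nu_le1 : forall A, msr nu A <= 1.
  by move=> A; rewrite -n1; apply: msr_le.
have two2 : S2 2.
  split => // A; split.
    by apply: le_trans (mu_le1 A) _; rewrite -[leLHS]add0r lerD ?msr_ge0 ?ler1n.
  by apply: le_trans (nu_le1 A) _; rewrite -[leLHS]add0r lerD ?msr_ge0 ?ler1n.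
rewrite /RPW_infty /LP -/S1 -/S2.
apply/eqP; rewrite eq_le; apply/andP; split.
- apply: lb_le_inf; first by exists 2.
  move=> e [e0 He].
  case: (leP 1 e) => [e1|e1].
    by apply: le_trans e1; apply: ge_inf.
  apply: ge_inf => //; split; first by rewrite (ltW e0) (ltW e1).
  rewrite mul1r.
  pose E := fun x y : seq_sub r => c (val x) (val y) < e.
  have HC : forall (A : {set (seq_sub r)}), \sum_(x in A) mu (val (x : seq_sub r)) <=
      \sum_(y in NB E A) nu (val (y : seq_sub r)) + e.
    move=> A; pose A' := [set t | exists2 x, x \in A & val x = t].
    have [h _] := He A'.
    have e1' : msr mu A' = \sum_(x in A) mu (val x).
      rewrite (msrX _ _ mur); apply: eq_bigl => x; apply/idP/idP.
        by rewrite inE => -[x' x'A /val_inj <-].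
      by move=> xA; rewrite inE; exists x.
    have e2 : msr nu (nbhd_eps c A' e) = \sum_(y in NB E A) nu (val y).
      rewrite (msrX _ _ nur); apply: eq_bigl => y; apply/idP/idP.
        rewrite inE => -[_ [x xA <-] cyx]; rewrite inE; apply/existsP; exists x.
        by rewrite xA /E csym.
      rewrite inE => /existsP[x /andP[xA cxy]]; rewrite inE; exists (val x).
        by exists x.
      by rewrite csym.
    by rewrite -e1' -e2.
  have [gX [g0 gE gr gc gt]] := hall_d mX0 nX0 HC.
  have a0 : 0 <= 1 - e by rewrite subr_ge0 ltW.
  have ta : 1 - e <= \sum_x \sum_y gX x y by rewrite -sumMu.
  have [g [gp gs]] := mkplan ur g0 gr gc mur nur a0 ta.
  apply: le_trans (W_le c0 c1 gp) _.
  apply: w_le => [|p /gs [x [y [gxy ->]]]] /=; first exact: ltW.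
  case: (boolP (E x y)) => [h|/gE h]; first exact: ltW.
  by rewrite h eqxx in gxy.
- apply: lb_le_inf; first by exists 1.
  move=> e [/andP[e0 e1] We].
  apply/ler_addgt0Pr => d d0.
  apply: ge_inf => //; split; first by apply: lt_le_trans d0 _; rewrite lerDr.
  have a0 : 0 <= 1 - e by rewrite subr_ge0.
  have a1 : 1 - e <= 1 by lra.
  have Wlt : W_infty c (1 - e) mu nu < e + d.
    by apply: le_lt_trans We _; rewrite mul1r ltrDl.
  have [g [gp gw]] := W_lt (plan_ex _ a0 a1) Wlt.
  case: gp => g0 gfs gm gm1 gm2.
  have sup : forall p, g p != 0 -> c p.1 p.2 < e + d.
    by move=> p gp; apply: le_lt_trans (w_ub c1 gp) gw.
  move=> A; split.
  + have h1 := msrC A mfs.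
    have h2 := msrC (A `*` setT) gfs.
    have h3 : msr g (~` (A `*` setT)) <= msr mu (~` A).
      apply: le_trans (gm1 (~` A)); apply: msr_le => // -[a b] _ /= h.
      by split => // aA; apply: h.
    have h4 : msr g (A `*` setT) <= msr nu (nbhd_eps c A (e + d)).
      apply: le_trans (gm2 _); apply: msr_le => // -[a b] gab [aA _]; split => //.
      by exists a => //; rewrite csym; apply: (sup _ gab).
    rewrite m1 in h1; rewrite gm in h2; lra.
  + have h1 := msrC A nfs.
    have h2 := msrC (setT `*` A) gfs.
    have h3 : msr g (~` (setT `*` A)) <= msr nu (~` A).
      apply: le_trans (gm2 (~` A)); apply: msr_le => // -[a b] _ /= h.
      by split => // bA; apply: h.
    have h4 : msr g (setT `*` A) <= msr mu (nbhd_eps c A (e + d)).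
      apply: le_trans (gm1 _); apply: msr_le => // -[a b] gab [_ bA]; split => //.
      by exists b => //; apply: (sup _ gab).
    rewrite n1 in h1; rewrite gm in h2; lra.
Qed.
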